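(* Consider a preferential (dynamic) attachment circuit of index $m\ge1$ (model described in the context). For $n\ge1$ let $W_{n-1}$, $B_{n-1}$ be the numbers of white and blue external nodes after $n-1$ insertions, and let $\mathcal{W}_{n-1,m}$, $\mathcal{B}_{n-1,m}$ be the numbers of white and blue external nodes after all $m$ parents of node $n$ have been chosen (not counting the external node of node $n$ itself). Then, for every $n$ with $(m+1)n\ge 5$, $$\mathbb{E}[\mathcal{W}^2_{n-1,m}\mid \mathbb{F}_{n-1,0}]=\frac{(m+1)(n-1)\bigl((mn-m+n-2)W_{n-1}+m\bigr)W_{n-1}}{(mn+n-2)(mn+n-1)},$$ $$\mathbb{E}[\mathcal{B}^2_{n-1,m}\mid \mathbb{F}_{n-1,0}]=\frac{(m+1)(n-1)\bigl(\mathcal{C}_1W_{n-1}^2+\mathcal{C}_2W_{n-1}B_{n-1}+\mathcal{C}_3B_{n-1}^2+\mathcal{C}_4W_{n-1}+\mathcal{C}_5B_{n-1}\bigr)}{(mn+n-4)(mn+n-3)(mn+n-2)(mn+n-1)},$$ where $\mathcal{C}_1=4m(m-1)(mn-m+n-2)$, $\mathcal{C}_2=4m(mn-m+n-3)(mn-m+n-2)$, $\mathcal{C}_3=(mn-m+n-4)(mn-m+n-3)(mn-m+n-2)$, $\mathcal{C}_4=4m(m^2n^2-m^2n+2mn^2+m^2-7mn+n^2+m-6n+10)$, $\mathcal{C}_5=2m(mn-m+n-2)(2mn-m+2n-7)$.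
   Context: Preferential (dynamic) attachment circuit of index $m\ge1$: at time $0$ there is a single node labeled $0$. At each time $n\ge1$ a new node labeled $n$ is added and $m$ parents are chosen for it one at a time, with replacement, among nodes $0,\dots,n-1$. Before the $(i+1)$-th choice ($i=0,\dots,m-1$), each existing node $v$ is chosen with probability $\frac{d_i(v)+1}{\sum_{x}(d_i(x)+1)}$, where $d_i(x)$ is the outdegree of $x$ in the current multigraph including the edges created by the first $i$ choices for node $n$; after each choice an edge from the chosen parent to node $n$ is immediately added (multi-edges allowed, counted with multiplicity). External nodes: a node of outdegree $s$ carries $s+1$ external nodes; they are colored white if the node has outdegree $0$, blue if it has outdegree $1$, red if it has outdegree $\ge2$. During the insertion of node $n$, after $s$ of the $m$ parent choices ($0\le s\le m$), $\mathcal{W}_{n-1,s}$ and $\mathcal{B}_{n-1,s}$ denote the numbers of white and blue external nodes carried by nodes $0,\dots,n-1$; thus $\mathcal{W}_{n-1,0}=W_{n-1}$, $\mathcal{B}_{n-1,0}=B_{n-1}$, and after the sample, node $n$ adds one white external node. $\mathbb{F}_{n-1,0}$ is the $\sigma$-field generated by the evolution of the circuit up to the completion of the insertion of node $n-1$. *)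

(* Defs.v *)
From mathcomp Require Import all_boot all_order all_algebra.
Set Implicit Arguments. Unset Strict Implicit. Unset Printing Implicit Defensive.
Import Order.TTheory GRing.Theory Num.Theory.
Local Open Scope ring_scope.

(* A history of the preferential attachment circuit after k insertions is
   h : seq (seq nat) of size k, where h`_j (j < k) is the sequence (in order
   of choice) of the parents chosen for node j.+1.  Nodes are 0..k. *)

Definition nnodes (h : seq (seq nat)) : nat := (size h).+1.

Definition valid_history (m : nat) (h : seq (seq nat)) : bool :=
  all (fun j => (size (nth [::] h j) == m) && all (fun v => v <= j)%N (nth [::] h j))
      (iota 0 (size h)).

Definition outdeg (h : seq (seq nat)) (ps : seq nat) (v : nat) : nat :=
  (sumn [seq count_mem v p | p <- h] + count_mem v ps)%N.

Definition total_weight (h : seq (seq nat)) (ps : seq nat) : nat :=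
  (\sum_(x < nnodes h) (outdeg h ps x).+1)%N.

Definition choice_prob (R : fieldType) (h : seq (seq nat)) (ps : seq nat) (v : nat) : R :=
  ((outdeg h ps v).+1)%:R / (total_weight h ps)%:R.

Fixpoint choice_expect (R : fieldType) (h : seq (seq nat)) (k : nat) (ps : seq nat)
    (f : seq nat -> R) : R :=
  match k with
  | 0%N => f ps
  | k'.+1 => \sum_(v < nnodes h) @choice_prob R h ps v * @choice_expect R h k' (rcons ps v) f
  end.

(* White external nodes among nodes 0..size h: nodes of outdegree 0 (one each). *)
Definition whites (h : seq (seq nat)) (ps : seq nat) : nat :=
  count (fun v => outdeg h ps v == 0%N) (iota 0 (nnodes h)).

(* Blue external nodes: nodes of outdegree 1 carry 2 external nodes each. *)
Definition blues (h : seq (seq nat)) (ps : seq nat) : nat :=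
  (2 * count (fun v => outdeg h ps v == 1%N) (iota 0 (nnodes h)))%N.

(* Main.v *)
Require Import Defs.
From mathcomp Require Import all_boot all_order all_algebra.
From mathcomp Require Import ring lra zify.
Import Order.TTheory GRing.Theory Num.Theory.

Lemma whitesE h ps : whites h ps = (\sum_(x < nnodes h) (outdeg h ps x == 0%N))%N.
Proof. by rewrite /whites -sumn_count sumnE big_map -(big_mkord xpredT (fun x => (outdeg h ps x == 0 : nat))) /index_iota subn0. Qed.

Lemma bluesE h ps : blues h ps = (2 * \sum_(x < nnodes h) (outdeg h ps x == 1%N))%N.
Proof. by rewrite /blues -sumn_count sumnE big_map -(big_mkord xpredT (fun x => (outdeg h ps x == 1 : nat))) /index_iota subn0. Qed.

Lemma outdeg_rcons h ps v x : outdeg h (rcons ps v) x = (outdeg h ps x + (v == x))%N.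
Proof. by rewrite /outdeg -cats1 count_cat /= addn0 addnA. Qed.

Lemma sum_shift h (ps : seq nat) (v : 'I_(nnodes h)) (F : nat -> nat) :
  (\sum_(x < nnodes h) F (outdeg h (rcons ps (nat_of_ord v)) x) + F (outdeg h ps v) =
   \sum_(x < nnodes h) F (outdeg h ps x) + F (outdeg h ps v).+1)%N.
Proof.
rewrite (bigD1 v) //= [in RHS](bigD1 v) //= outdeg_rcons eqxx addn1.
rewrite (eq_bigr (fun x : 'I_(nnodes h) => F (outdeg h ps x))); first lia.
move=> i Hi; rewrite outdeg_rcons; case: eqP => [E|]; last by rewrite addn0.
by move: Hi; rewrite (val_inj E) eqxx.
Qed.

Lemma tw_rcons h (ps : seq nat) (v : 'I_(nnodes h)) :
  total_weight h (rcons ps (nat_of_ord v)) = (total_weight h ps).+1.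
Proof.
have := sum_shift h ps v (fun d => d.+1). rewrite /total_weight. lia.
Qed.
Local Open Scope ring_scope.

Fixpoint stepE (R : fieldType) (g : R -> R -> R) (k : nat) (w b t : R) : R :=
  match k with
  | 0%N => g w b
  | k'.+1 => w / t * stepE R g k' (w - 1) (b + 2) (t + 1)
           + b / t * stepE R g k' w (b - 2) (t + 1)
           + (1 - w / t - b / t) * stepE R g k' w b (t + 1)
  end.
Arguments stepE {R}.

Lemma tw_pos h ps : (0 < total_weight h ps)%N.
Proof. by rewrite /total_weight /nnodes big_ord_recl. Qed.

Lemma lemA (R : realFieldType) h k (ps : seq nat) (g : R -> R -> R) :
  @choice_expect R h k ps (fun ps => g (whites h ps)%:R (blues h ps)%:R)
  = stepE g k (whites h ps)%:R (blues h ps)%:R (total_weight h ps)%:R.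
Proof.
elim: k ps => [|k IH] ps //=.
under eq_bigr => v _ do rewrite IH tw_rcons.
set t := total_weight h ps.
set W := whites h ps. set B := blues h ps.
set A := stepE g k (W%:R - 1) (B%:R + 2) (t.+1)%:R.
set Bv := stepE g k W%:R (B%:R - 2) (t.+1)%:R.
set C := stepE g k W%:R B%:R (t.+1)%:R.
have tn0 : t%:R != 0 :> R by rewrite pnatr_eq0 -lt0n tw_pos.
have pt : forall v : 'I_(nnodes h),
  choice_prob R h ps v * stepE g k (whites h (rcons ps v))%:R (blues h (rcons ps v))%:R (t.+1)%:R
  = (((outdeg h ps v == 0%N) : nat)%:R * A + ((2 * (outdeg h ps v == 1%N))%N)%:R * Bv
     + (((outdeg h ps v).+1 - (outdeg h ps v == 0%N) - 2 * (outdeg h ps v == 1%N))%N)%:R * C) / t%:R.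
  move=> v.
  have Hw := sum_shift h ps v (fun d => (d == 0%N) : nat).
  have Hb := sum_shift h ps v (fun d => (d == 1%N) : nat).
  rewrite -!whitesE in Hw; rewrite /choice_prob -/t.
  have Hb' : (blues h (rcons ps v) + 2 * (outdeg h ps v == 1%N) = B + 2 * (outdeg h ps v == 0%N))%N.
    rewrite /B !bluesE; move: Hb => /=; case: (outdeg h ps v) => [|[|d]] /=; lia.
  move: Hw Hb'; rewrite -/W.
  case: (outdeg h ps v) => [|[|d]] /=; rewrite ?addn0 ?muln0 ?muln1 ?subn0 ?subnn => Hw Hb'.
  - have -> : (whites h (rcons ps v))%:R = W%:R - 1 :> R by rewrite -Hw natrD addrK.
    rewrite Hb' natrD -/A; by field.
    have -> : (blues h (rcons ps v))%:R = B%:R - 2 :> R.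
      by rewrite -Hb' natrD addrK.
    rewrite Hw -/Bv; by field.
  - rewrite Hw Hb' -/C; by field.
under eq_bigr => v _ do rewrite pt.
rewrite -mulr_suml !big_split /= -!mulr_suml -!natr_sum.
rewrite -whitesE -/W -big_distrr /= -bluesE -/B.
have -> : (\sum_(i < nnodes h) ((outdeg h ps i).+1 - (outdeg h ps i == 0%N) - 2 * (outdeg h ps i == 1%N)))%N
   = (t - W - B)%N.
  have : (t = \sum_(i < nnodes h) ((outdeg h ps i).+1 - (outdeg h ps i == 0%N) - 2 * (outdeg h ps i == 1%N)) + W + B)%N.
    rewrite /t /total_weight /W /B whitesE bluesE big_distrr /= -!big_split /=.
    apply: eq_bigr => i _; case: (outdeg h ps i) => [|[|d]] //=; lia.
  lia.
have HWB : (W + B <= t)%N.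
  rewrite /t /total_weight /W /B whitesE bluesE big_distrr /= -!big_split /=.
  apply: leq_sum => i _; case: (outdeg h ps i) => [|[|d]] //=; lia.
rewrite !natrB; [|lia|lia].
rewrite natr1 -/A -/Bv -/C.
by field.
Qed.

Section Closed.
Variable R : realFieldType.
Definition Dd (T : R) := (T - 1) * (T - 2) * (T - 3) * (T - 4).
Definition Qw (t T w b : R) : R :=
  ((t - 1) * (t - 2) * (T - 3) * (T - 4) * w ^+ 2
   + (-12*T + 7*T^+2 - T^+3 + 12*t + 5*t*T - 6*t*T^+2 + t*T^+3 - 12*t^+2 + 7*t^+2*T - t^+2*T^+2) * w)
  / Dd T.
Definition Qb (t T w b : R) : R :=
  ((-8*T + 8*T^+2 + 8*t - 4*t*T - 12*t*T^+2 - 4*t^+2 + 20*t^+2*T + 4*t^+2*T^+2 - 8*t^+3 - 8*t^+3*T + 4*t^+4) * w ^+ 2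
 + (-24*T + 24*t + 44*t*T - 44*t^+2 - 24*t^+2*T + 24*t^+3 + 4*t^+3*T - 4*t^+4) * w * b
 + (24 - 50*t + 35*t^+2 - 10*t^+3 + t^+4) * b ^+ 2
 + (-40*T + 20*T^+2 - 4*T^+3 + 40*t + 24*t*T - 12*t*T^+2 + 4*t*T^+3 - 44*t^+2 + 8*t^+2*T - 8*t^+2*T^+2 + 8*t^+3 + 8*t^+3*T - 4*t^+4) * w
 + (-28*T + 4*T^+2 + 28*t + 42*t*T - 6*t*T^+2 - 46*t^+2 - 14*t^+2*T + 2*t^+2*T^+2 + 20*t^+3 - 2*t^+4) * b)
  / Dd T.

Lemma natr_sub_neq0 (T i : nat) : (i < T)%N -> (T%:R - i%:R : R) != 0.
Proof. by move=> H; rewrite subr_eq0 eqr_nat gtn_eqF. Qed.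

Lemma lemBw k t w b : (0 < t)%N -> (5 <= t + k)%N ->
  stepE (fun w b : R => w ^+ 2) k w b t%:R = Qw t%:R (t + k)%:R w b.
Proof.
elim: k t w b => [|k IH] t w b t0 tk.
  rewrite addn0 /= /Qw /Dd.
  have h1 := @natr_sub_neq0 t 1. have h2 := @natr_sub_neq0 t 2.
  have h3 := @natr_sub_neq0 t 3. have h4 := @natr_sub_neq0 t 4.
  rewrite addn0 in tk.
  field; apply/and4P; split; [apply: h4|apply: h3|apply: h2|apply: h1]; lia.
rewrite /= natr1 !IH; [|lia|lia|lia|lia|lia|lia].
rewrite addSnnS.
have tn0 : t%:R != 0 :> R by rewrite pnatr_eq0 -lt0n.
set T := (t + k.+1)%N.
have h1 := @natr_sub_neq0 T 1. have h2 := @natr_sub_neq0 T 2.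
have h3 := @natr_sub_neq0 T 3. have h4 := @natr_sub_neq0 T 4.
rewrite /Qw /Dd -natr1.
field; apply/and5P; split; [apply: h4|apply: h3|apply: h2|apply: h1|exact: tn0]; lia.
Qed.
Lemma lemBb k t w b : (0 < t)%N -> (5 <= t + k)%N ->
  stepE (fun w b : R => b ^+ 2) k w b t%:R = Qb t%:R (t + k)%:R w b.
Proof.
elim: k t w b => [|k IH] t w b t0 tk.
  rewrite addn0 /= /Qb /Dd.
  have h1 := @natr_sub_neq0 t 1. have h2 := @natr_sub_neq0 t 2.
  have h3 := @natr_sub_neq0 t 3. have h4 := @natr_sub_neq0 t 4.
  rewrite addn0 in tk.
  field; apply/and4P; split; [apply: h4|apply: h3|apply: h2|apply: h1]; lia.
rewrite /= natr1 !IH; [|lia|lia|lia|lia|lia|lia].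
rewrite addSnnS.
have tn0 : t%:R != 0 :> R by rewrite pnatr_eq0 -lt0n.
set T := (t + k.+1)%N.
have h1 := @natr_sub_neq0 T 1. have h2 := @natr_sub_neq0 T 2.
have h3 := @natr_sub_neq0 T 3. have h4 := @natr_sub_neq0 T 4.
rewrite /Qb /Dd -natr1.
field; apply/and5P; split; [apply: h4|apply: h3|apply: h2|apply: h1|exact: tn0]; lia.
Qed.
End Closed.

Lemma sum_eq1 N b : (b < N)%N -> (\sum_(x < N) (b == x :> nat) = 1)%N.
Proof.
move=> Hb; rewrite (bigD1 (Ordinal Hb)) //= eqxx big1 // => i Hi.
case: eqP => // E; move: Hi; suff -> : i = Ordinal Hb by rewrite eqxx.
by apply: val_inj; rewrite /= E.
Qed.

Lemma sum_count_mem N (a : seq nat) : all (fun v => v < N)%N a ->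
  (\sum_(x < N) count_mem (x : nat) a = size a)%N.
Proof.
elim: a => [|b a IH] /=; first by rewrite big1.
move=> /andP [Hb Ha]; rewrite big_split /= IH // sum_eq1 //.
Qed.

Lemma sum_hist N m (hs : seq (seq nat)) :
  all (fun p => (size p == m) && all (fun v => v < N)%N p) hs ->
  (\sum_(x < N) sumn [seq count_mem (x : nat) p | p <- hs] = size hs * m)%N.
Proof.
elim: hs => [|a hs IH] /=; first by rewrite big1.
move=> /andP [/andP [/eqP Hs Ha] Hh]; rewrite big_split /= IH // sum_count_mem // Hs.
by rewrite mulSn.
Qed.

Lemma tw0 m h : valid_history m h ->
  total_weight h [::] = (size h * m + (size h).+1)%N.
Proof.
move=> Hv.
have Hall : all (fun p => (size p == m) && all (fun v => v < nnodes h)%N p) h.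
  rewrite -[in X in all _ X](mkseq_nth [::] h) /mkseq all_map.
  apply/allP => j Hj; move: Hv => /allP /(_ j Hj) /andP [Hs Ha] /=; rewrite Hs /=.
  apply/allP => v Hvin; move: Ha => /allP /(_ v Hvin).
  move: Hj; rewrite mem_iota /nnodes => /andP [_ Hj] Hvj; lia.
rewrite /total_weight.
under eq_bigr => x _ do rewrite /outdeg /= addn0 -addn1.
by rewrite big_split /= (sum_hist _ _ _ Hall) sum1_card card_ord /nnodes.
Qed.

Theorem proposition2 (R : realFieldType) (m n : nat) (h : seq (seq nat)) :
  (1 <= m)%N -> (1 <= n)%N -> (5 <= (m + 1) * n)%N ->
  size h = n.-1 -> valid_history m h ->
  let W : R := (whites h [::])%:R in
  let B : R := (blues h [::])%:R in
  let mr : R := m%:R in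
  let nr : R := n%:R in
  let C1 := 4 * mr * (mr - 1) * (mr * nr - mr + nr - 2) in
  let C2 := 4 * mr * (mr * nr - mr + nr - 3) * (mr * nr - mr + nr - 2) in
  let C3 := (mr * nr - mr + nr - 4) * (mr * nr - mr + nr - 3) * (mr * nr - mr + nr - 2) in
  let C4 := 4 * mr * (mr ^+ 2 * nr ^+ 2 - mr ^+ 2 * nr + 2 * mr * nr ^+ 2 + mr ^+ 2
                      - 7 * mr * nr + nr ^+ 2 + mr - 6 * nr + 10) in
  let C5 := 2 * mr * (mr * nr - mr + nr - 2) * (2 * mr * nr - mr + 2 * nr - 7) in
  @choice_expect R h m [::] (fun ps => ((whites h ps)%:R : R) ^+ 2)
    = (mr + 1) * (nr - 1) * ((mr * nr - mr + nr - 2) * W + mr) * W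
      / ((mr * nr + nr - 2) * (mr * nr + nr - 1))
  /\
  @choice_expect R h m [::] (fun ps => ((blues h ps)%:R : R) ^+ 2)
    = (mr + 1) * (nr - 1) * (C1 * W ^+ 2 + C2 * W * B + C3 * B ^+ 2 + C4 * W + C5 * B)
      / ((mr * nr + nr - 4) * (mr * nr + nr - 3) * (mr * nr + nr - 2) * (mr * nr + nr - 1)).
Proof.
move=> hm hn hmn hs hv W B mr nr C1 C2 C3 C4 C5.
have Ht := tw0 _ _ hv; rewrite hs (prednK hn) in Ht.
have HT : (total_weight h [::] + m = (m + 1) * n)%N.
  rewrite Ht; case: (n) hn => // n0 _ /=; rewrite mulnS mulnDl mul1n; lia.
have t0 : (0 < total_weight h [::])%N by rewrite Ht; lia.
have t5 : (5 <= total_weight h [::] + m)%N by rewrite HT.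
have et : (total_weight h [::])%:R = mr * nr - mr + nr :> R.
  rewrite Ht natrD natrM -subn1 natrB // /mr /nr; ring.
have eT : (total_weight h [::] + m)%:R = mr * nr + nr :> R.
  rewrite natrD et; ring.
have hT : forall i, (i < (m + 1) * n)%N -> mr * nr + nr - i%:R != 0.
  by move=> i Hi; rewrite -eT HT; apply: natr_sub_neq0.
have d1 : mr * nr + nr - 1 != 0 by have := hT 1%N; rewrite ?natr1 => ->; lia.
have d2 : mr * nr + nr - 2 != 0 by have := hT 2%N; rewrite ?natr1 => ->; lia.
have d3 : mr * nr + nr - 3 != 0 by have := hT 3%N; rewrite ?natr1 => ->; lia.
have d4 : mr * nr + nr - 4 != 0 by have := hT 4%N; rewrite ?natr1 => ->; lia.
move: d1 d2 d3 d4; rewrite /mr /nr => d1 d2 d3 d4.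
split.
- have E := lemA R h m [::] (fun w b : R => w ^+ 2); simpl in E; rewrite E.
  rewrite lemBw // et eT /Qw /Dd -/W.
  by field; rewrite d1 d2 d3 d4.
- have E := lemA R h m [::] (fun w b : R => b ^+ 2); simpl in E; rewrite E.
  rewrite lemBb // et eT /Qb /Dd -/W -/B /C1 /C2 /C3 /C4 /C5.
  by field; rewrite d1 d2 d3 d4.
Qed.
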